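(* Let $d\in\mathbb N$, $\varepsilon\in(0,1]$, and let $h=h(d,\varepsilon)$ be the height of Thiémard's partition as defined in the context. Let $r\in\{1,\dots,h\}$ and $\boldsymbol i,\boldsymbol j\in S^r$ with $i_\nu\le j_\nu$ for $\nu=1,\dots,r$, and assume both $Q^{(r)}_{\boldsymbol i}$ and $Q^{(r)}_{\boldsymbol j}$ are generated in the decomposition process. Then $$W(Q^{(r)}_{\boldsymbol i})\ge W(Q^{(r)}_{\boldsymbol j}),$$ and, if $W(Q^{(r)}_{\boldsymbol j})>\varepsilon$, $$\delta^{Q^{(r)}_{\boldsymbol i}}\ge \delta^{Q^{(r)}_{\boldsymbol j}}.$$ The first inequality is strict if and only if $i_\nu<j_\nu$ for some $\nu\in\{1,\dots,r-1\}$; the second inequality is strict if and only if $i_\nu<j_\nu$ for some $\nu\in\{1,\dots,r\}$.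
   Context: Fix $d\in\mathbb N$ and $\varepsilon\in(0,1]$. For $x,y\in[0,1]^d$ write $[x,y)=\prod_{i=1}^d[x_i,y_i)$ and define the weight $W([x,y))=\prod_{i=1}^d y_i-\prod_{i=1}^d x_i$. Thiémard's decomposition process generates boxes, each with a type in $\{1,\dots,d+1\}$. It starts with $I^d=[0,1)^d=[(0,\dots,0),(1,\dots,1))$, of type $1$. Whenever a generated box $P=[\alpha,\beta)$ has type $j\le d$ and $W(P)>\varepsilon$, it is decomposed (procedure DECOMPOSE$(P,j)$) as follows: put $$\delta^P=\left(\frac{\prod_{i=1}^d\beta_i-\varepsilon}{\prod_{i=1}^{j-1}\alpha_i\prod_{i=j}^d\beta_i}\right)^{1/(d-j+1)},\qquad \gamma^P_i=\alpha_i\ (i<j),\quad \gamma^P_i=\delta^P\beta_i\ (i\ge j).$$ The children of $P$ are the boxes $Q^P_k=[a^{(k)},b^{(k)})$ for $k=j,\dots,d$, where $a^{(k)}_i=\gamma^P_i$ for $i<k$, $a^{(k)}_i=\alpha_i$ for $i\ge k$, $b^{(k)}_k=\gamma^P_k$, $b^{(k)}_i=\beta_i$ for $i\neq k$; the box $Q^P_k$ has type $k$. In addition $P$ has the child $Q^P_{d+1}=[\gamma^P,\beta)$ of type $d+1$. A generated box of type $d+1$ or of weight at most $\varepsilon$ is not decomposed. (Known facts from Thiémard: $\delta^P\in(0,1)$; the process terminates after finitely many steps; $W(Q^P_{d+1})=\varepsilon$ and $W(Q^P_k)=\delta^PW(P)$ for $j\le k\le d$.) Indexing: for $r\in\mathbb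 N$ let $S^r=\{\boldsymbol i\in\mathbb N^r: 1\le i_1\le i_2\le\dots\le i_r\le d\}$, $S^0=\{0\}$, and $\mathbf 1_r=(1,\dots,1)\in\mathbb N^r$. Put $Q^{(0)}_0=I^d$, $Q^{(1)}_{j_1}=Q^{I^d}_{j_1}$ ($j_1=1,\dots,d$, defined when $W(I^d)>\varepsilon$), and for $\boldsymbol j\in S^r$ with $Q^{(r)}_{\boldsymbol j}$ generated and $W(Q^{(r)}_{\boldsymbol j})>\varepsilon$, $Q^{(r+1)}_{(\boldsymbol j,j_{r+1})}=Q^{Q^{(r)}_{\boldsymbol j}}_{j_{r+1}}$ for $j_{r+1}=j_r,\dots,d$. The height $h=h(d,\varepsilon)$ of the partition is $0$ if $W(I^d)\le\varepsilon$, and otherwise the largest $h\in\mathbb N$ such that there is $\boldsymbol j\in S^{h-1}$ with $Q^{(h-1)}_{\boldsymbol j}$ generated and $W(Q^{(h-1)}_{\boldsymbol j})>\varepsilon$. *)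

(* Defs.v *)
From mathcomp Require Import all_boot all_order all_algebra.
From mathcomp Require Import reals exp.
Set Implicit Arguments. Unset Strict Implicit. Unset Printing Implicit Defensive.
Import Order.TTheory GRing.Theory Num.Theory.
Local Open Scope ring_scope.

Section Thiemard.
Variables (R : realType) (d : nat) (eps : R).

(* A box [x,y) in [0,1]^d is the pair (x,y); coordinates are indexed 1..d
   (values of the functions outside 1..d are irrelevant). *)
Definition box := ((nat -> R) * (nat -> R))%type.

Definition prodv (x : nat -> R) (a b : nat) : R := \prod_(a <= i < b) x i.

Definition Id_box : box := (fun _ => 0, fun _ => 1).

Definition W (P : box) : R := prodv P.2 1 d.+1 - prodv P.1 1 d.+1.

Definition delta (P : box) (j : nat) : R :=
  powR ((prodv P.2 1 d.+1 - eps) / (prodv P.1 1 j * prodv P.2 j d.+1))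
       ((d - j + 1)%:R^-1).

Definition gamma (P : box) (j : nat) (i : nat) : R :=
  if (i < j)%N then P.1 i else delta P j * P.2 i.

Definition child (P : box) (j k : nat) : box :=
  (fun i => if (i < k)%N then gamma P j i else P.1 i,
   fun i => if i == k then gamma P j k else P.2 i).

(* gen P t s : follow the index sequence s starting from the generated box P
   of type t; returns None if some box along the way is not generated
   (i.e. is not decomposed, or the index is not a valid child index). *)
Fixpoint gen (P : box) (t : nat) (s : seq nat) : option box :=
  match s with
  | [::] => Some P
  | k :: s' =>
      if (eps < W P) && (t <= k <= d)%N then gen (child P t k) k s' else None
  end.

(* Q^{(r)}_s for s in S^r (s = [::] encodes Q^{(0)}_0 = I^d);
   Q s = Some P  means  Q^{(r)}_s is generated and equals P. *)
Definition Q (s : seq nat) : option box := gen Id_box 1 s.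

Definition inS (r : nat) (s : seq nat) : bool :=
  [&& size s == r, sorted leq s & all (fun k => (1 <= k <= d)%N) s].

Definition is_height (h : nat) : Prop :=
  (W Id_box <= eps /\ h = 0%N) \/
  (eps < W Id_box /\ (1 <= h)%N /\
   (exists s P, inS h.-1 s /\ Q s = Some P /\ eps < W P) /\
   (forall h' s P, (1 <= h')%N -> inS h'.-1 s -> Q s = Some P -> eps < W P ->
      (h' <= h)%N)).

End Thiemard.

(* Main.v *)
Require Import Defs.
From mathcomp Require Import all_boot all_order all_algebra.
From mathcomp Require Import reals exp.
From mathcomp Require Import ring lra zify.
Import Order.TTheory GRing.Theory Num.Theory.
Local Open Scope ring_scope.
Set Implicit Arguments. Unset Strict Implicit. Unset Printing Implicit Defensive.

Section S.
Variables (R : realType) (d : nat) (eps : R).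

Definition Dn (P : box R) (t : nat) : R := prodv P.1 1 t * prodv P.2 t d.+1.
Definition wv (P : box R) : R := prodv P.2 1 d.+1.

Lemma prodv_split (x : nat -> R) a k b : (a <= k < b)%N ->
  prodv x a b = prodv x a k * x k * prodv x k.+1 b.
Proof.
move=> /andP[h1 h2]; rewrite /prodv (big_cat_nat h1 (ltnW h2)) /=.
by rewrite [\prod_(k <= i < b) _]big_ltn // mulrA.
Qed.

Lemma delta_eq P t : delta d eps P t =
  powR ((wv P - eps) / Dn P t) ((d - t + 1)%:R^-1).
Proof. by []. Qed.

Lemma child_1d P t k : (k <= d)%N -> (child d eps P t k).1 d = P.1 d.
Proof. by move=> hk /=; rewrite ltnNge hk. Qed.

Lemma child_wv P t k : (1 <= t <= k)%N -> (k <= d)%N ->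
  wv (child d eps P t k) = delta d eps P t * wv P.
Proof.
move=> /andP[h1 h2] hk.
have hk1 : (1 <= k < d.+1)%N by apply/andP; split; lia.
rewrite /wv (prodv_split _ hk1) (prodv_split P.2 hk1) /= eqxx /gamma ltnNge h2 /=.
have -> : prodv (fun i => if i == k then delta d eps P t * P.2 k else P.2 i) 1 k = prodv P.2 1 k.
  apply: eq_big_nat => i /andP[_ hi]; by rewrite (ltn_eqF hi).
have -> : prodv (fun i => if i == k then delta d eps P t * P.2 k else P.2 i) k.+1 d.+1 = prodv P.2 k.+1 d.+1.
  apply: eq_big_nat => i /andP[hi _]; by rewrite (gtn_eqF hi).
ring.
Qed.

Lemma child_Dn P t k : (1 <= t <= k)%N -> (k <= d)%N ->
  Dn (child d eps P t k) k = delta d eps P t ^+ (k - t).+1 * Dn P t.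
Proof.
move=> /andP[h1 h2] hk.
have hk1 : (t <= k < d.+1)%N by apply/andP; split; lia.
rewrite /Dn (prodv_split P.2 hk1) /=.
have -> : prodv (fun i => if (i < k)%N then gamma d eps P t i else P.1 i) 1 k =
   prodv P.1 1 t * (delta d eps P t ^+ (k - t) * prodv P.2 t k).
  rewrite /prodv (big_cat_nat h1 h2) /=; congr (_ * _).
    apply: eq_big_nat => i /andP[_ hi].
    by rewrite /gamma hi (leq_trans hi h2).
  rewrite -prodr_const_nat -big_split /=.
  apply: eq_big_nat => i /andP[hi hik].
  by rewrite /gamma hik ltnNge hi.
rewrite [prodv _ k _]/prodv big_ltn ?ltnS // eqxx /gamma ltnNge h2 /=.
have -> : \prod_(k.+1 <= i < d.+1) (if i == k then delta d eps P t * P.2 k else P.2 i) = \prod_(k.+1 <= i < d.+1) P.2 i.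
  apply: eq_big_nat => i /andP[hi _]; by rewrite (gtn_eqF hi).
rewrite exprS /prodv; ring.
Qed.

End S.

Section R.
Variable R : realType.

Lemma c_cmp (e w1 w2 a1 a2 : R) : 0 < e -> e < w2 -> w2 <= w1 -> 0 < a2 -> a2 <= a1 ->
  a1 < 1 -> e < a2 * w2 ->
  (a2 * w2 - e) / (w2 - e) <= (a1 * w1 - e) / (w1 - e) /\
  ((w2 < w1 \/ a2 < a1) -> (a2 * w2 - e) / (w2 - e) < (a1 * w1 - e) / (w1 - e)).
Proof.
move=> he hw2 hw ha2 ha ha1 hw2'.
have p2 : 0 < w2 - e by lra.
have p1 : 0 < w1 - e by lra.
have key : (a1 * w1 - e) * (w2 - e) - (a2 * w2 - e) * (w1 - e) =
  (a1 - a2) * w1 * (w2 - e) + e * (1 - a2) * (w1 - w2) by ring.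
have t1 : 0 <= (a1 - a2) * w1 * (w2 - e).
  by apply: mulr_ge0; [apply: mulr_ge0|]; lra.
have t2 : 0 <= e * (1 - a2) * (w1 - w2).
  by apply: mulr_ge0; [apply: mulr_ge0|]; lra.
split.
  rewrite ler_pdivrMr // mulrAC ler_pdivlMr //; lra.
move=> hs; rewrite ltr_pdivrMr // mulrAC ltr_pdivlMr //.
case: hs => hs.
  have : 0 < e * (1 - a2) * (w1 - w2) by apply: mulr_gt0; [apply: mulr_gt0|]; lra.
  lra.
have : 0 < (a1 - a2) * w1 * (w2 - e) by apply: mulr_gt0; [apply: mulr_gt0|]; lra.
lra.
Qed.

Lemma c_lt (e w a : R) : 0 < e -> e < w -> a < 1 -> (a * w - e) / (w - e) < a.
Proof.
move=> he hw ha; rewrite ltr_pdivrMr; last lra.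
have : 0 < (1 - a) * e by apply: mulr_gt0; lra.
lra.
Qed.

Lemma c_pos (e w a : R) : e < w -> e < a * w -> 0 < (a * w - e) / (w - e).
Proof. move=> h1 h2; rewrite divr_gt0 //; lra. Qed.

Lemma comb (n1 n2 C1 C2 L1 L2 X1 X2 : R) : 0 <= n2 -> n2 <= n1 -> C2 <= C1 ->
  L2 <= L1 -> C2 < L2 -> (n1 + 1) * X1 = C1 + n1 * L1 ->
  (n2 + 1) * X2 = C2 + n2 * L2 ->
  X2 <= X1 /\ ((C2 < C1 \/ n2 < n1) -> X2 < X1).
Proof.
move=> hn2 hn hC hL hCL e1 e2.
have key : (n2 + 1) * (n1 + 1) * (X1 - X2) =
   (C1 - C2) * (n2 + 1) + n1 * (n2 + 1) * (L1 - L2) + (n1 - n2) * (L2 - C2).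
  have -> : (n2 + 1) * (n1 + 1) * (X1 - X2) =
     (n2 + 1) * ((n1 + 1) * X1) - (n1 + 1) * ((n2 + 1) * X2) by ring.
  rewrite e1 e2; ring.
have P0 : 0 < (n2 + 1) * (n1 + 1) by apply: mulr_gt0; lra.
have t1 : 0 <= (C1 - C2) * (n2 + 1) by apply: mulr_ge0; lra.
have t2 : 0 <= n1 * (n2 + 1) * (L1 - L2) by apply: mulr_ge0; [apply: mulr_ge0|]; lra.
have t3 : 0 <= (n1 - n2) * (L2 - C2) by apply: mulr_ge0; lra.
split.
  have : 0 <= (n2 + 1) * (n1 + 1) * (X1 - X2) by lra.
  rewrite pmulr_rge0 //; lra.
move=> hs.
have : 0 < (n2 + 1) * (n1 + 1) * (X1 - X2).
  case: hs => hs.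
    have : 0 < (C1 - C2) * (n2 + 1) by apply: mulr_gt0; lra.
    lra.
  have : 0 < (n1 - n2) * (L2 - C2) by apply: mulr_gt0; lra.
  lra.
rewrite pmulr_rgt0 //; lra.
Qed.

End R.

Section S3.
Variables (R : realType) (d : nat) (eps : R).
Hypothesis heps : 0 < eps.

Definition Inv (P : box R) (t : nat) : Prop :=
  [/\ (1 <= t)%N && (t <= d)%N, P.1 d = 0, 0 < Dn d P t & wv d P - eps < Dn d P t].

Definition L P t := ln (delta d eps P t).

Lemma W_wv P t : Inv P t -> W d P = wv d P.
Proof.
case=> /andP[h1 h2] h0 _ _.
have hd : (1 <= d < d.+1)%N by apply/andP; split; lia.
by rewrite /W (prodv_split P.1 hd) h0 mulr0 mul0r subr0.
Qed.

Lemma delta_gt0 P t : Inv P t -> eps < wv d P -> 0 < delta d eps P t.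
Proof.
case=> _ _ hD _ hw; rewrite delta_eq; apply: powR_gt0; rewrite divr_gt0 //; lra.
Qed.

Lemma L_eq P t : Inv P t -> eps < wv d P ->
  (d - t + 1)%:R * L P t = ln (wv d P - eps) - ln (Dn d P t).
Proof.
move=> hi hw; have [_ _ hD _] := hi.
rewrite /L delta_eq ln_powR mulrA mulfV ?mul1r; last by rewrite pnatr_eq0 addn1.
by rewrite ln_div // posrE; lra.
Qed.

Lemma L_lt0 P t : Inv P t -> eps < wv d P -> L P t < 0.
Proof.
move=> hi hw; have [/andP[h1 h2] _ hD hD'] := hi.
have e := L_eq hi hw.
have : ln (wv d P - eps) < ln (Dn d P t) by rewrite ltr_ln // posrE; lra.
have hm : 0 < (d - t + 1)%:R :> R by rewrite ltr0n addn1.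
move=> hlt.
have : (d - t + 1)%:R * L P t < 0 by lra.
by rewrite pmulr_rlt0.
Qed.

Lemma delta_lt1 P t : Inv P t -> eps < wv d P -> delta d eps P t < 1.
Proof.
move=> hi hw; have := L_lt0 hi hw; rewrite /L -ln1 ltr_ln // posrE //.
exact: delta_gt0.
Qed.

Lemma child_inv P t k : Inv P t -> eps < wv d P -> (t <= k <= d)%N ->
  Inv (child d eps P t k) k.
Proof.
move=> hi hw /andP[htk hkd]; have [/andP[h1 h2] h0 hD hD'] := hi.
have he := heps.
have h1k : (1 <= t <= k)%N by rewrite h1 htk.
have dp := delta_gt0 hi hw; have dl := delta_lt1 hi hw.
have Lneg := L_lt0 hi hw; have e := L_eq hi hw.
have hDc : 0 < Dn d (child d eps P t k) k.
  by rewrite child_Dn // mulr_gt0 // exprn_gt0.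
split => //.
- by rewrite (leq_trans h1 htk) hkd.
- by rewrite child_1d.
rewrite child_wv //.
have hwe : delta d eps P t * wv d P - eps < wv d P - eps.
  have : 0 < (1 - delta d eps P t) * wv d P.
    apply: mulr_gt0. lra. lra.
  lra.
suff : wv d P - eps <= Dn d (child d eps P t k) k by lra.
rewrite -ler_ln ?posrE //; last lra.
rewrite child_Dn // lnM ?posrE ?exprn_gt0 // lnXn // -mulr_natr.
have hm : (d - t + 1)%:R = (k - t).+1%:R + (d - k)%:R :> R.
  by rewrite -natrD; congr (_%:R); lia.
rewrite hm mulrDl in e.
have : 0 <= (d - k)%:R * - L P t by apply: mulr_ge0; [exact: ler0n | lra].
rewrite -/(L P t) mulrN [L P t * _]mulrC; lra.
Qed.

Lemma L_child P t k : Inv P t -> eps < wv d P -> (t <= k <= d)%N ->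
  eps < wv d (child d eps P t k) ->
  ((d - k)%:R + 1) * L (child d eps P t k) k =
  ln ((delta d eps P t * wv d P - eps) / (wv d P - eps)) + (d - k)%:R * L P t.
Proof.
move=> hi hw hk hwc; have [/andP[h1 h2] h0 hD hD'] := hi.
have he := heps.
have /andP[htk hkd] := hk.
have h1k : (1 <= t <= k)%N by rewrite h1 htk.
have dp := delta_gt0 hi hw.
have e := L_eq hi hw.
have ec := L_eq (child_inv hi hw hk) hwc.
rewrite natr1 -[(d - k).+1]addn1 ec.
rewrite child_Dn // lnM ?posrE ?exprn_gt0 // lnXn // -[ln (delta _ _ _ _) *+ _]mulr_natr.
rewrite -/(L P t) [L P t * _]mulrC.
rewrite child_wv // in hwc *.
rewrite ln_div ?posrE; [|lra|lra].
have hm : (d - t + 1)%:R = (k - t).+1%:R + (d - k)%:R :> R.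
  by rewrite -natrD; congr (_%:R); lia.
rewrite hm mulrDl in e.
lra.
Qed.

End S3.

Section S4.
Variables (R : realType) (d : nat) (eps : R).
Hypothesis heps : 0 < eps.

Definition PInv (P1 : box R) t1 (P2 : box R) t2 (bw bd : bool) : Prop :=
  [/\ Inv d eps P1 t1, Inv d eps P2 t2, wv d P2 <= wv d P1,
      (wv d P2 < wv d P1 <-> bw) &
      (eps < wv d P2 -> L d eps P2 t2 <= L d eps P1 t1 /\
         (L d eps P2 t2 < L d eps P1 t1 <-> bd))].

Lemma eq_of (x y : R) (b : bool) : y <= x -> (y < x <-> b) -> b = false -> y = x.
Proof.
move=> h1 h2 hb; apply/eqP; rewrite eq_le h1 /= leNgt; apply/negP => /h2.
by rewrite hb.
Qed.

Lemma step P1 t1 P2 t2 bw bd k1 k2 :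
  PInv P1 t1 P2 t2 bw bd -> eps < wv d P1 -> eps < wv d P2 ->
  (t1 <= k1 <= d)%N -> (t2 <= k2 <= d)%N -> (k1 <= k2)%N ->
  PInv (child d eps P1 t1 k1) k1 (child d eps P2 t2 k2) k2
       (bw || bd) [|| bd, bw | (k1 < k2)%N].
Proof.
move=> [i1 i2 hw hW hL] hw1 hw2 hk1 hk2 hk.
have he := heps.
have [/andP[a1 b1] _ _ _] := i1; have [/andP[a2 b2] _ _ _] := i2.
have /andP[c1 e1] := hk1; have /andP[c2 e2] := hk2.
have p1 := delta_gt0 i1 hw1; have p2 := delta_gt0 i2 hw2.
have l1 := delta_lt1 i1 hw1; have l2 := delta_lt1 i2 hw2.
have [hL1 hL2] := hL hw2.
have hd : delta d eps P2 t2 <= delta d eps P1 t1.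
  by rewrite -ler_ln ?posrE.
have hd' : delta d eps P2 t2 < delta d eps P1 t1 <-> bd.
  by rewrite -ltr_ln ?posrE.
have ht1 : (1 <= t1 <= k1)%N by rewrite a1 c1.
have ht2 : (1 <= t2 <= k2)%N by rewrite a2 c2.
rewrite /PInv !child_wv //.
set d1 := delta d eps P1 t1 in hd hd' l1 l2 p1 p2 *.
set d2 := delta d eps P2 t2 in hd hd' l1 l2 p1 p2 *.
set w1 := wv d P1 in hw hW hw1 hw2 *.
set w2 := wv d P2 in hw hW hw1 hw2 *.
have hwle : d2 * w2 <= d1 * w1 by apply: ler_pM => //; lra.
have hwiff : d2 * w2 < d1 * w1 <-> bw || bd.
  split.
    move=> h; apply/negPn/negP; rewrite negb_or => /andP[/negbTE nw /negbTE nd].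
    have ew := eq_of hw hW nw; have ed := eq_of hd hd' nd.
    rewrite ew ed in h; lra.
  case/orP => [/hW h|/hd' h].
    have : d2 * w2 <= d1 * w2 by apply: ler_wpM2r => //; lra.
    have : d1 * w2 < d1 * w1 by rewrite ltr_pM2l.
    lra.
  have : d1 * w2 <= d1 * w1 by apply: ler_wpM2l => //; lra.
  have : d2 * w2 < d1 * w2 by rewrite ltr_pM2r //; lra.
  lra.
split => //.
- by apply: child_inv.
- by apply: child_inv.
move=> hwc2.
have hwc1 : eps < d1 * w1 by lra.
have hc := c_cmp he hw2 hw p2 hd l1 hwc2.
have cp1 : 0 < (d1 * w1 - eps) / (w1 - eps) by apply: c_pos.
have cp2 : 0 < (d2 * w2 - eps) / (w2 - eps) by apply: c_pos.
have hC : ln ((d2 * w2 - eps) / (w2 - eps)) <= ln ((d1 * w1 - eps) / (w1 - eps)).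
  by rewrite ler_ln ?posrE //; case: hc.
have hCL : ln ((d2 * w2 - eps) / (w2 - eps)) < L d eps P2 t2.
  by rewrite /L ltr_ln ?posrE //; apply: c_lt.
have q1 : eps < wv d (child d eps P1 t1 k1) by rewrite child_wv.
have q2 : eps < wv d (child d eps P2 t2 k2) by rewrite child_wv.
have X1 := L_child heps i1 hw1 hk1 q1.
have X2 := L_child heps i2 hw2 hk2 q2.
rewrite -/d1 -/d2 -/w1 -/w2 in X1 X2.
have hn : (d - k2)%:R <= (d - k1)%:R :> R by rewrite ler_nat leq_sub2l.
have [c1' c2'] := comb (ler0n _ _) hn hC hL1 hCL X1 X2.
split => //; split => //.
- move=> hlt; apply/negPn/negP; rewrite !negb_or => /and3P[/negbTE nd /negbTE nw nk].
  have ek : k1 = k2 by clear -hk nk; lia.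
  have ew := eq_of hw hW nw.
  have ed := eq_of hL1 (proj2 (hL hw2)) nd.
  have ed' : d2 = d1 by apply/eqP; rewrite eq_le hd /= leNgt; apply/negP => /hd'; rewrite nd.
  subst k2.
  rewrite ew ed ed' in X2.
  have : ((d - k1)%:R + 1) * L d eps (child d eps P1 t1 k1) k1 =
         ((d - k1)%:R + 1) * L d eps (child d eps P2 t2 k1) k1 by rewrite X1 X2.
  have nz : ((d - k1)%:R + 1 : R) != 0 by rewrite lt0r_neq0 // ltr_wpDl // ler0n.
  by move/(mulfI nz) => ee; move: hlt; rewrite ee ltxx.
- case/or3P => h; apply: c2'.
  + left; rewrite ltr_ln ?posrE //; apply: (proj2 hc); right; exact/hd'.
  + left; rewrite ltr_ln ?posrE //; apply: (proj2 hc); left; exact/hW.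
  + right; rewrite ltr_nat; clear -h e2; lia.
Qed.

End S4.

Fixpoint fl (bw bd : bool) (s1 s2 : seq nat) : bool * bool :=
  match s1, s2 with
  | a :: s1', b :: s2' => fl (bw || bd) [|| bd, bw | (a < b)%N] s1' s2'
  | _, _ => (bw, bd)
  end.

Section S5.
Variables (R : realType) (d : nat) (eps : R).
Hypothesis heps : 0 < eps.

Lemma gen_pair s1 : forall s2 (P1 P2 : box R) t1 t2 bw bd Q1 Q2,
  size s1 = size s2 ->
  (forall nu, (nu < size s1)%N -> (nth 0%N s1 nu <= nth 0%N s2 nu)%N) ->
  PInv d eps P1 t1 P2 t2 bw bd ->
  gen d eps P1 t1 s1 = Some Q1 -> gen d eps P2 t2 s2 = Some Q2 ->
  PInv d eps Q1 (last t1 s1) Q2 (last t2 s2) (fl bw bd s1 s2).1 (fl bw bd s1 s2).2.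
Proof.
elim: s1 => [|a s1 IH] [|b s2] P1 P2 t1 t2 bw bd Q1 Q2 //=.
  by move=> _ _ hI [<-] [<-].
move=> [hs] hn hI.
have [i1 i2 _ _ _] := hI.
rewrite (W_wv heps i1) (W_wv heps i2).
case: ifP => // /andP[hw1 hk1]; case: ifP => // /andP[hw2 hk2] g1 g2.
have hab : (a <= b)%N by apply: (hn 0%N).
apply: (IH s2 _ _ _ _ _ _ _ _ hs _ _ g1 g2).
  by move=> nu hnu; apply: (hn nu.+1).
exact: step.
Qed.

Lemma ex_shift (p : nat -> bool) n :
  (exists nu, (nu < n.+1)%N /\ p nu) <-> p 0%N \/ exists nu, (nu < n)%N /\ p nu.+1.
Proof.
split.
  move=> [[|nu] [h1 h2]]; first by left.
  by right; exists nu.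
case=> [h|[nu [h1 h2]]]; first by exists 0%N.
by exists nu.+1.
Qed.

End S5.

Lemma fl_spec s1 : forall s2 bw bd, size s1 = size s2 -> (0 < size s1)%N ->
  ((fl bw bd s1 s2).2 <-> (bw || bd) \/
      exists nu, (nu < size s1)%N /\ (nth 0%N s1 nu < nth 0%N s2 nu)%N) /\
  ((fl bw bd s1 s2).1 <-> (bw || bd) \/
      exists nu, (nu < (size s1).-1)%N /\ (nth 0%N s1 nu < nth 0%N s2 nu)%N).
Proof.
elim: s1 => [|a s1 IH] [|b s2] bw bd //= [hs] _.
case: s1 IH hs => [|a' s1] IH hs.
  case: s2 hs => // _ /=.
  split.
    split.
      case/or3P => h; first (by left; rewrite h orbT); first (by left; rewrite h).
      by right; exists 0%N.
    by case=> [/orP[h|h]|[[|nu] [h1 h2]]]; rewrite ?h ?h2 ?orbT.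
  split; first by left.
  by case=> [//|[nu [h1 _]]].
have [H2 H1] := IH s2 (bw || bd) [|| bd, bw | (a < b)%N] hs isT.
rewrite /= in H1 H2 *.
split.
  rewrite H2 (ex_shift (fun nu => nth 0%N (a :: a' :: s1) nu < nth 0%N (b :: s2) nu)%N).
  rewrite /=; split.
    case=> [/orP[/orP[->|->]|/or3P[->|->|h]]|h]; rewrite ?orbT; try by left.
      by right; left.
    by right; right.
  case=> [/orP[->|->]|[h|h]]; rewrite ?orbT; try by left.
    by left; rewrite h !orbT.
  by right.
rewrite H1 (ex_shift (fun nu => nth 0%N (a :: a' :: s1) nu < nth 0%N (b :: s2) nu)%N).
rewrite /=; split.
  case=> [/orP[/orP[->|->]|/or3P[->|->|h]]|h]; rewrite ?orbT; try by left.
    by right; left.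
  by right; right.
case=> [/orP[->|->]|[h|h]]; rewrite ?orbT; try by left.
  by left; rewrite h !orbT.
by right.
Qed.
Unset Implicit Arguments.
Theorem mainTheorem2 (R : realType) (d : nat) (eps : R)
  (heps0 : 0 < eps) (heps1 : eps <= 1) (h : nat) (hh : is_height d eps h)
  (r : nat) (hr1 : (1 <= r)%N) (hrh : (r <= h)%N)
  (i j : seq nat) (hi : inS d r i) (hj : inS d r j)
  (hij : forall nu, (nu < r)%N -> (nth 0%N i nu <= nth 0%N j nu)%N)
  (Pi Pj : box R) (hPi : Q d eps i = Some Pi) (hPj : Q d eps j = Some Pj) :
  W d Pj <= W d Pi /\
  (eps < W d Pj -> delta d eps Pj (last 0%N j) <= delta d eps Pi (last 0%N i)) /\
  (W d Pj < W d Pi <->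
     exists nu, (nu < r.-1)%N /\ (nth 0%N i nu < nth 0%N j nu)%N) /\
  (eps < W d Pj ->
     (delta d eps Pj (last 0%N j) < delta d eps Pi (last 0%N i) <->
      exists nu, (nu < r)%N /\ (nth 0%N i nu < nth 0%N j nu)%N)).
Proof.
have si : size i = r by case/and3P: hi => /eqP.
have sj : size j = r by case/and3P: hj => /eqP.
have [a [i' ei]] : exists a i', i = a :: i'.
  by case: i si {hi hij hPi} => [|a i'] /= si; [lia | exists a, i'].
have [b [j' ej]] : exists b j', j = b :: j'.
  by case: j sj {hj hij hPj} => [|b j'] /= sj; [lia | exists b, j'].
have hd1 : (1 <= d)%N.
  move: hPi; rewrite ei /Q /=; case: ifP => // /andP[_ /andP[ha1 ha2]] _; lia.
have li : last 1%N i = last 0%N i by rewrite ei.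
have lj : last 1%N j = last 0%N j by rewrite ej.
have inv0 : Inv d eps (Id_box R) 1.
  have e1 : Dn d (Id_box R) 1 = 1.
    by rewrite /Dn /prodv big_geq // prodr_const_nat expr1n mul1r.
  have e2 : wv d (Id_box R) = 1 by rewrite /wv /prodv prodr_const_nat expr1n.
  split; rewrite ?e1 ?e2 //; try lra; by rewrite ?leqnn ?hd1.
have P0 : PInv d eps (Id_box R) 1 (Id_box R) 1 false false.
  split => //; first by rewrite ltxx.
  by move=> _; rewrite lexx ltxx.
have sij : size i = size j by rewrite si sj.
have hn : forall nu, (nu < size i)%N -> (nth 0%N i nu <= nth 0%N j nu)%N.
  by move=> nu; rewrite si; exact: hij.
have H := gen_pair heps0 sij hn P0 hPi hPj.
have ps : (0 < size i)%N by rewrite si.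
have [F2 F1] := fl_spec false false sij ps.
rewrite li lj si in H F1 F2.
have [iPi iPj hw hW hL] := H.
rewrite (W_wv heps0 iPi) (W_wv heps0 iPj).
split => //; split; [|split].
- move=> he; have hei : eps < wv d Pi by lra.
  rewrite -ler_ln ?posrE; [exact: (hL he).1 | exact: delta_gt0 | exact: delta_gt0].
- rewrite hW F1 /=; split; [by case|by right].
- move=> he; have hei : eps < wv d Pi by lra.
  rewrite -ltr_ln ?posrE; [|exact: delta_gt0|exact: delta_gt0].
  rewrite (hL he).2 F2 /=; split; [by case|by right].
Qed.
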